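(* Let $K\ge 0$ be an integer and, for $k=0,1,\dots,K$, let $w_k=2^{k-K}$ and let $\mathcal{G}^k$ be a finite subset of the lattice $w_k\mathbb{Z}^3$, with a real coefficient $\lambda_{\boldsymbol{g}}$ attached to each $\boldsymbol{g}\in\mathcal{G}^k$ (points of different levels $k$ are treated as distinct even if they coincide in position). Define $f:\mathbb{R}^3\to\mathbb{R}$ by $$f(\boldsymbol{v})=\sum_{k=0}^K\sum_{\boldsymbol{g}\in\mathcal{G}^k}\lambda_{\boldsymbol{g}}\,\boldsymbol{B}\!\left(\frac{\boldsymbol{v}-\boldsymbol{g}}{w_k}\right),\qquad \boldsymbol{B}(x,y,z)=B(x)B(y)B(z),$$ where $B(t)=1+t$ for $t\in[-1,0]$, $B(t)=1-t$ for $t\in(0,1]$, and $B(t)=0$ otherwise. Let $\mathcal{M}\subset\mathbb{R}^3$ be a polygonal mesh surface, i.e. the union of finitely many non-degenerate triangles. Subdivide each triangle of $\mathcal{M}$ into finitely many non-degenerate sub-triangles, each of which is contained in a single depth-0 cell (a closed cube of the form $\prod_{i=1}^3[w_0a_i,w_0(a_i+1)]$ with $a_i\in\mathbb{Z}$). For each such sub-triangle $T$ with vertices $\boldsymbol{v}_1,\boldsymbol{v}_2,\boldsymbol{v}_3$, let $H_T(\alpha,\beta)=f\big(\boldsymbol{v}_1+\alpha(\boldsymbol{v}_2-\boldsymbol{v}_1)+\beta(\boldsymbol{v}_3-\boldsymbol{v}_1)\big)$ on $D=\{(\alpha,\beta):\alpha,\beta\ge0,\ \alpha+\beta\le1\}$,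 and let the candidate set $\boldsymbol{C}_T\subset T$ consist of: (1) the points of $T$ corresponding to $(\alpha,\beta)\in D$ with $\nabla_{(\alpha,\beta)}H_T(\alpha,\beta)=\boldsymbol{0}$; (2) the points on the three edges of $T$ at which the derivative of the restriction of $H_T$ to that edge (i.e. of the univariate function $\hat H_T(t)$ obtained by imposing $\alpha=0$, $\beta=0$, or $\alpha+\beta=1$) vanishes; and (3) the three vertices of $T$. Let $\mathcal{C}$ be the union of the sets $\boldsymbol{C}_T$ over all sub-triangles $T$, and set $$\epsilon_1=\min_{\boldsymbol{v}\in\mathcal{C}}f(\boldsymbol{v}),\qquad \epsilon_2=\max_{\boldsymbol{v}\in\mathcal{C}}f(\boldsymbol{v}).$$ Then the thin-shell space $\{\boldsymbol{x}\in\mathbb{R}^3:\epsilon_1\le f(\boldsymbol{x})\le\epsilon_2\}$ rigorously wraps $\mathcal{M}$, i.e. $\epsilon_1\le f(\boldsymbol{v})\le\epsilon_2$ for every $\boldsymbol{v}\in\mathcal{M}$.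
   Context: In the paper, $f$ is a first-degree tri-variate tensor-product B-spline defined on the grid points of a sparse voxel octree of height $K$ over the model (depth $0$ is the finest level, with cell width $2^{-K}$ for a model normalized to the unit box; depth $k$ has cell width $w_k$); its coefficients are obtained by fitting the signed distance function of $\mathcal{M}$ at the grid points, but the conclusion concerns only the function $f$ of the stated form. The ''thin shell'' of $\mathcal{M}$ is the region between the level sets $f=\epsilon_1$ and $f=\epsilon_2$. *)

(* Defs.v *)
From Stdlib Require Import Reals List ZArith.
Import ListNotations.
Open Scope R_scope.

Definition pt : Type := (R * R * R)%type.
Definition px (p : pt) : R := fst (fst p).
Definition py (p : pt) : R := snd (fst p).
Definition pz (p : pt) : R := snd p.
Definition padd (p q : pt) : pt := (px p + px q, py p + py q, pz p + pz q).
Definition psub (p q : pt) : pt := (px p - px q, py p - py q, pz p - pz q).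
Definition pscal (c : R) (p : pt) : pt := (c * px p, c * py p, c * pz p).
Definition cross (p q : pt) : pt :=
  (py p * pz q - pz p * py q, pz p * px q - px p * pz q, px p * py q - py p * px q).

Definition w (K k : nat) : R := / (2 ^ (K - k)).

Definition zpt : Type := (Z * Z * Z)%type.
Definition gridpt (c : R) (a : zpt) : pt :=
  (c * IZR (fst (fst a)), c * IZR (snd (fst a)), c * IZR (snd a)).

Definition B (t : R) : R :=
  if Rle_dec (-1) t then
    (if Rle_dec t 0 then 1 + t
     else if Rle_dec t 1 then 1 - t else 0)
  else 0.

Definition B3 (p : pt) : R := B (px p) * B (py p) * B (pz p).

(* f(v) = sum_{k=0}^K sum_{g in G^k} lambda_g B((v - g)/w_k);
   G k : list of integer coordinates a (the grid point is g = w_k a),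
   lam k a : coefficient of grid point w_k a of level k. *)
Definition fspl (K : nat) (G : nat -> list zpt) (lam : nat -> zpt -> R) (v : pt) : R :=
  sum_f_R0 (fun k =>
    fold_right (fun a acc =>
      lam k a * B3 (pscal (/ w K k) (psub v (gridpt (w K k) a))) + acc) 0 (G k)) K.

Definition tri : Type := (pt * pt * pt)%type.
Definition t1 (T : tri) : pt := fst (fst T).
Definition t2 (T : tri) : pt := snd (fst T).
Definition t3 (T : tri) : pt := snd T.

Definition tpar (T : tri) (al be : R) : pt :=
  padd (t1 T) (padd (pscal al (psub (t2 T) (t1 T))) (pscal be (psub (t3 T) (t1 T)))).

Definition inD (al be : R) : Prop := 0 <= al /\ 0 <= be /\ al + be <= 1.

Definition nondegenerate (T : tri) : Prop :=
  cross (psub (t2 T) (t1 T)) (psub (t3 T) (t1 T)) <> (0, 0, 0).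

Definition in_tri (T : tri) (p : pt) : Prop :=
  exists al be, inD al be /\ p = tpar T al be.

Definition in_tri_open (T : tri) (p : pt) : Prop :=
  exists al be, 0 < al /\ 0 < be /\ al + be < 1 /\ p = tpar T al be.

Definition in_depth0_cell (K : nat) (T : tri) : Prop :=
  exists a1 a2 a3 : Z, forall p, in_tri T p ->
    w K 0 * IZR a1 <= px p <= w K 0 * (IZR a1 + 1) /\
    w K 0 * IZR a2 <= py p <= w K 0 * (IZR a2 + 1) /\
    w K 0 * IZR a3 <= pz p <= w K 0 * (IZR a3 + 1).

Definition valid_subdivision (K : nat) (T : tri) (S : list tri) : Prop :=
  (forall T', In T' S -> nondegenerate T' /\ in_depth0_cell K T') /\
  (forall p, in_tri T p <-> exists T', In T' S /\ in_tri T' p) /\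
  (forall i j p, (i < length S)%nat -> (j < length S)%nat -> i <> j ->
     ~ (in_tri_open (nth i S T) p /\ in_tri_open (nth j S T) p)).

(* H has zero (Frechet) derivative at (al, be) relative to the domain D,
   i.e. grad H(al,be) = 0 for H considered on D. *)
Definition zero_grad_on_D (H : R -> R -> R) (al be : R) : Prop :=
  forall eps, 0 < eps -> exists del, 0 < del /\
    forall al' be', inD al' be' -> Rabs (al' - al) + Rabs (be' - be) < del ->
      Rabs (H al' be' - H al be) <= eps * (Rabs (al' - al) + Rabs (be' - be)).

(* h : [0,1] -> R has zero derivative at t (relative to [0,1]). *)
Definition zero_deriv_on_01 (h : R -> R) (t : R) : Prop :=
  forall eps, 0 < eps -> exists del, 0 < del /\
    forall s, 0 <= s <= 1 -> Rabs (s - t) < del ->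
      Rabs (h s - h t) <= eps * Rabs (s - t).

Definition candidate (F : pt -> R) (T : tri) (p : pt) : Prop :=
  let H := fun al be => F (tpar T al be) in
  (exists al be, inD al be /\ zero_grad_on_D H al be /\ p = tpar T al be) \/
  (exists t, 0 <= t <= 1 /\ zero_deriv_on_01 (fun s => H 0 s) t /\ p = tpar T 0 t) \/
  (exists t, 0 <= t <= 1 /\ zero_deriv_on_01 (fun s => H s 0) t /\ p = tpar T t 0) \/
  (exists t, 0 <= t <= 1 /\ zero_deriv_on_01 (fun s => H s (1 - s)) t /\
             p = tpar T t (1 - t)) \/
  p = t1 T \/ p = t2 T \/ p = t3 T.

(* The mesh: each triangle paired with its valid_subdivision. *)
Definition on_mesh (M : list (tri * list tri)) (p : pt) : Prop :=
  exists TS, In TS M /\ in_tri (fst TS) p.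

Definition cand_set (F : pt -> R) (M : list (tri * list tri)) (p : pt) : Prop :=
  exists TS T, In TS M /\ In T (snd TS) /\ candidate F T p.

Definition is_min_on (F : pt -> R) (C : pt -> Prop) (e : R) : Prop :=
  (exists c, C c /\ F c = e) /\ (forall c, C c -> e <= F c).
Definition is_max_on (F : pt -> R) (C : pt -> Prop) (e : R) : Prop :=
  (exists c, C c /\ F c = e) /\ (forall c, C c -> F c <= e).

(* Main.v *)
Require Import Defs.
From Stdlib Require Import Reals List ZArith Lra Lia Psatz.
Open Scope R_scope.

Definition Qf (g : R -> R -> R) : Prop :=
  exists (ga gb : R -> R -> R) (L M : R), 0 <= L /\ 0 <= M /\
  (forall a b, inD a b -> Rabs (g a b) <= M /\ Rabs (ga a b) <= M /\ Rabs (gb a b) <= M) /\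
  (forall a b a' b', inD a b -> inD a' b' ->
     Rabs (g a' b' - g a b - ga a b * (a' - a) - gb a b * (b' - b))
       <= L * ((Rabs (a' - a) + Rabs (b' - b)) * (Rabs (a' - a) + Rabs (b' - b)))).

Lemma Qf_ext_D g h : (forall a b, inD a b -> g a b = h a b) -> Qf h -> Qf g.
Proof.
  intros E (ga & gb & L & M & HL & HM & Hb & Hr).
  exists ga, gb, L, M; repeat split; auto.
  - rewrite E; auto; apply Hb; auto.
  - apply Hb; auto.
  - apply Hb; auto.
  - intros a b a' b' H1 H2; rewrite !E; auto.
Qed.

Lemma Qf_ext g h : (forall a b, g a b = h a b) -> Qf h -> Qf g.
Proof. intros E; apply Qf_ext_D; auto. Qed.

Lemma Qf_const c : Qf (fun _ _ => c).
Proof.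
  exists (fun _ _ => 0), (fun _ _ => 0), 0, (Rabs c).
  pose proof (Rabs_pos c).
  repeat split; try lra; try (rewrite Rabs_R0; lra).
  intros; replace (c - c - 0 * (a' - a) - 0 * (b' - b)) with 0 by ring.
  rewrite Rabs_R0; lra.
Qed.

Lemma inD_abs a b : inD a b -> Rabs a <= 1 /\ Rabs b <= 1.
Proof. unfold inD; intros; split; apply Rabs_le; lra. Qed.

Lemma Qf_fst : Qf (fun a _ => a).
Proof.
  exists (fun _ _ => 1), (fun _ _ => 0), 0, 1.
  repeat split; try lra; try (rewrite ?Rabs_R0, ?Rabs_R1; lra).
  - apply (inD_abs a b); auto.
  - intros; replace (a' - a - 1 * (a' - a) - 0 * (b' - b)) with 0 by ring.
    rewrite Rabs_R0; lra.
Qed.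

Lemma Qf_snd : Qf (fun _ b => b).
Proof.
  exists (fun _ _ => 0), (fun _ _ => 1), 0, 1.
  repeat split; try lra; try (rewrite ?Rabs_R0, ?Rabs_R1; lra).
  - apply (inD_abs a b); auto.
  - intros; replace (b' - b - 0 * (a' - a) - 1 * (b' - b)) with 0 by ring.
    rewrite Rabs_R0; lra.
Qed.

Lemma Qf_plus g h : Qf g -> Qf h -> Qf (fun a b => g a b + h a b).
Proof.
  intros (ga & gb & Lg & Mg & HLg & HMg & Hbg & Hrg) (ha & hb & Lh & Mh & HLh & HMh & Hbh & Hrh).
  exists (fun a b => ga a b + ha a b), (fun a b => gb a b + hb a b), (Lg + Lh), (Mg + Mh).
  repeat split; try lra.
  - destruct (Hbg a b H) as [? [? ?]]; destruct (Hbh a b H) as [? [? ?]].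
    eapply Rle_trans; [apply Rabs_triang|lra].
  - destruct (Hbg a b H) as [? [? ?]]; destruct (Hbh a b H) as [? [? ?]].
    eapply Rle_trans; [apply Rabs_triang|lra].
  - destruct (Hbg a b H) as [? [? ?]]; destruct (Hbh a b H) as [? [? ?]].
    eapply Rle_trans; [apply Rabs_triang|lra].
  - intros a b a' b' H1 H2.
    specialize (Hrg a b a' b' H1 H2); specialize (Hrh a b a' b' H1 H2).
    match goal with |- Rabs ?e <= _ => replace e with
      ((g a' b' - g a b - ga a b * (a' - a) - gb a b * (b' - b)) +
       (h a' b' - h a b - ha a b * (a' - a) - hb a b * (b' - b))) by ring end.
    eapply Rle_trans; [apply Rabs_triang|lra].
Qed.

Lemma lin_bound x1 x2 y1 y2 M : Rabs x1 <= M -> Rabs x2 <= M ->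
  Rabs (x1 * y1 + x2 * y2) <= M * (Rabs y1 + Rabs y2).
Proof.
  intros H1 H2. eapply Rle_trans; [apply Rabs_triang|].
  rewrite !Rabs_mult.
  pose proof (Rabs_pos y1); pose proof (Rabs_pos y2).
  pose proof (Rmult_le_compat_r _ _ _ H H1).
  pose proof (Rmult_le_compat_r _ _ _ H0 H2). lra.
Qed.

Lemma d_le2 a b a' b' : inD a b -> inD a' b' -> Rabs (a' - a) + Rabs (b' - b) <= 2.
Proof.
  unfold inD; intros.
  assert (Rabs (a' - a) <= 1) by (apply Rabs_le; lra).
  assert (Rabs (b' - b) <= 1) by (apply Rabs_le; lra). lra.
Qed.

Lemma Qf_diff_bound g ga gb L M a b a' b' :
  0 <= L -> Rabs (ga a b) <= M -> Rabs (gb a b) <= M -> inD a b -> inD a' b' ->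
  Rabs (g a' b' - g a b - ga a b * (a' - a) - gb a b * (b' - b))
       <= L * ((Rabs (a' - a) + Rabs (b' - b)) * (Rabs (a' - a) + Rabs (b' - b))) ->
  Rabs (g a' b' - g a b) <= (M + 2 * L) * (Rabs (a' - a) + Rabs (b' - b)).
Proof.
  intros HL H1 H2 HD HD' Hr.
  set (d := Rabs (a' - a) + Rabs (b' - b)) in *.
  assert (d <= 2) by (apply d_le2; auto).
  assert (0 <= d) by (unfold d; pose proof (Rabs_pos (a'-a)); pose proof (Rabs_pos (b'-b)); lra).
  pose proof (lin_bound (ga a b) (gb a b) (a' - a) (b' - b) M H1 H2). fold d in H3.
  replace (g a' b' - g a b) with ((ga a b * (a' - a) + gb a b * (b' - b)) +
    (g a' b' - g a b - ga a b * (a' - a) - gb a b * (b' - b))) by ring.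
  eapply Rle_trans; [apply Rabs_triang|].
  assert (0 <= L * d * (2 - d)) by (apply Rmult_le_pos; [apply Rmult_le_pos|]; lra).
  assert (L * (d * d) <= 2 * L * d) by lra. lra.
Qed.

Lemma Qf_mult g h : Qf g -> Qf h -> Qf (fun a b => g a b * h a b).
Proof.
  intros (ga & gb & Lg & Mg & HLg & HMg & Hbg & Hrg) (ha & hb & Lh & Mh & HLh & HMh & Hbh & Hrh).
  exists (fun a b => g a b * ha a b + ga a b * h a b),
         (fun a b => g a b * hb a b + gb a b * h a b),
         (Mg * Lh + Mh * Lg + (Mg + 2 * Lg) * (Mh + 2 * Lh)), (2 * (Mg * Mh)).
  split; [nra|split; [nra|split]].
  - intros a b HD. destruct (Hbg a b HD) as [G1 [G2 G3]]; destruct (Hbh a b HD) as [H1 [H2 H3]].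
    pose proof (Rabs_pos (g a b)); pose proof (Rabs_pos (h a b)).
    pose proof (Rabs_pos (ga a b)); pose proof (Rabs_pos (gb a b)).
    pose proof (Rabs_pos (ha a b)); pose proof (Rabs_pos (hb a b)).
    repeat split.
    + rewrite Rabs_mult. pose proof (Rmult_le_compat _ _ _ _ H H0 G1 H1). nra.
    + eapply Rle_trans; [apply Rabs_triang|]. rewrite !Rabs_mult.
      pose proof (Rmult_le_compat _ _ _ _ H H6 G1 H2).
      pose proof (Rmult_le_compat _ _ _ _ H4 H0 G2 H1). nra.
    + eapply Rle_trans; [apply Rabs_triang|]. rewrite !Rabs_mult.
      pose proof (Rmult_le_compat _ _ _ _ H H7 G1 H3).
      pose proof (Rmult_le_compat _ _ _ _ H5 H0 G3 H1). nra.
  - intros a b a' b' HD HD'.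
    destruct (Hbg a b HD) as [G1 [G2 G3]]; destruct (Hbh a b HD) as [H1 [H2 H3]].
    pose proof (Qf_diff_bound g ga gb Lg Mg a b a' b' HLg G2 G3 HD HD' (Hrg a b a' b' HD HD')) as Ug.
    pose proof (Qf_diff_bound h ha hb Lh Mh a b a' b' HLh H2 H3 HD HD' (Hrh a b a' b' HD HD')) as Uh.
    specialize (Hrg a b a' b' HD HD'); specialize (Hrh a b a' b' HD HD').
    set (d := Rabs (a' - a) + Rabs (b' - b)) in *.
    assert (0 <= d) by (unfold d; pose proof (Rabs_pos (a'-a)); pose proof (Rabs_pos (b'-b)); lra).
    set (Rg := g a' b' - g a b - ga a b * (a' - a) - gb a b * (b' - b)) in *.
    set (Rh := h a' b' - h a b - ha a b * (a' - a) - hb a b * (b' - b)) in *.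
    set (u := g a' b' - g a b) in *. set (v := h a' b' - h a b) in *.
    match goal with |- Rabs ?e <= _ => replace e with (g a b * Rh + h a b * Rg + u * v)
      by (unfold Rg, Rh, u, v; ring) end.
    eapply Rle_trans; [apply Rabs_triang|].
    eapply Rle_trans; [apply Rplus_le_compat_r; apply Rabs_triang|].
    rewrite !Rabs_mult.
    pose proof (Rabs_pos (g a b)); pose proof (Rabs_pos (h a b)).
    pose proof (Rabs_pos Rg); pose proof (Rabs_pos Rh); pose proof (Rabs_pos u); pose proof (Rabs_pos v).
    pose proof (Rmult_le_compat _ _ _ _ (Rabs_pos _) (Rabs_pos _) G1 Hrh).
    pose proof (Rmult_le_compat _ _ _ _ (Rabs_pos _) (Rabs_pos _) H1 Hrg).
    pose proof (Rmult_le_compat _ _ _ _ (Rabs_pos _) (Rabs_pos _) Ug Uh).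
    nra.
Qed.

Lemma Qf_opp g : Qf g -> Qf (fun a b => - g a b).
Proof.
  intros H. apply Qf_ext with (fun a b => (-1) * g a b).
  intros; ring. apply Qf_mult; auto. apply Qf_const.
Qed.

Lemma Qf_minus g h : Qf g -> Qf h -> Qf (fun a b => g a b - h a b).
Proof.
  intros. apply Qf_ext with (fun a b => g a b + - h a b). intros; ring.
  apply Qf_plus; auto. apply Qf_opp; auto.
Qed.

Ltac qf := repeat (first [apply Qf_const | apply Qf_fst | apply Qf_snd | apply Qf_plus
  | apply Qf_minus | apply Qf_mult | apply Qf_opp]).

Definition clamp (lo hi x : R) := Rmax lo (Rmin hi x).

Lemma clamp_in lo hi x : lo <= hi -> lo <= clamp lo hi x <= hi.
Proof. intros; unfold clamp, Rmax, Rmin; repeat destruct Rle_dec; lra. Qed.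

Lemma clamp_id lo hi x : lo <= x <= hi -> clamp lo hi x = x.
Proof. intros; unfold clamp, Rmax, Rmin; repeat destruct Rle_dec; lra. Qed.

Lemma clamp_lip lo hi x y : lo <= hi -> Rabs (clamp lo hi x - clamp lo hi y) <= Rabs (x - y).
Proof. intros; unfold clamp, Rmax, Rmin; repeat destruct Rle_dec; split_Rabs; lra. Qed.

Lemma lip_cont (f : R -> R) C c : 0 <= C -> (forall x y, Rabs (f x - f y) <= C * Rabs (x - y)) ->
  continuity_pt f c.
Proof.
  intros HC Hf. unfold continuity_pt, continue_in, limit1_in, limit_in.
  intros eps Heps. exists (eps / (C + 1)). split.
  - apply Rdiv_lt_0_compat; lra.
  - intros x [_ Hx]. simpl in *. unfold R_dist in *.
    eapply Rle_lt_trans; [apply Hf|].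
    assert (Rabs (x - c) * (C + 1) < eps).
    { apply (Rmult_lt_compat_r (C+1)) in Hx; [|lra].
      replace (eps / (C + 1) * (C + 1)) with eps in Hx by (field; lra). lra. }
    pose proof (Rabs_pos (x - c)). nra.
Qed.

Definition Lip2 (g : R -> R -> R) C := forall a b a' b', inD a b -> inD a' b' ->
  Rabs (g a' b' - g a b) <= C * (Rabs (a' - a) + Rabs (b' - b)).

Lemma Qf_lip g : Qf g -> exists C, 0 <= C /\ Lip2 g C.
Proof.
  intros (ga & gb & L & M & HL & HM & Hb & Hr).
  exists (M + 2 * L); split; [lra|].
  intros a b a' b' HD HD'. destruct (Hb a b HD) as [_ [H1 H2]].
  apply (Qf_diff_bound g ga gb L M); auto.
Qed.

Lemma max2D g C : 0 <= C -> Lip2 g C ->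
  exists a b, inD a b /\ forall a' b', inD a' b' -> g a' b' <= g a b.
Proof.
  intros HC Hg.
  set (S := fun x y => exists be, 0 <= be <= 1 - clamp 0 1 x /\ y = g (clamp 0 1 x) be).
  assert (HDc : forall x be, 0 <= be <= 1 - clamp 0 1 x -> inD (clamp 0 1 x) be).
  { intros x be Hbe. pose proof (clamp_in 0 1 x). unfold inD; lra. }
  assert (bnd : forall x, bound (S x)).
  { intros x. exists (g 0 0 + 2 * C). intros y [be [Hbe ->]].
    assert (inD 0 0) by (unfold inD; lra).
    pose proof (Hg 0 0 _ _ H (HDc x be Hbe)).
    pose proof (d_le2 _ _ _ _ H (HDc x be Hbe)).
    assert (C * (Rabs (clamp 0 1 x - 0) + Rabs (be - 0)) <= C * 2) by (apply Rmult_le_compat_l; lra).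
    split_Rabs; lra. }
  assert (ne : forall x, exists y, S x y).
  { intros x. exists (g (clamp 0 1 x) 0). exists 0. pose proof (clamp_in 0 1 x). split; [lra|auto]. }
  set (m := fun x => proj1_sig (completeness (S x) (bnd x) (ne x))).
  assert (Hm : forall x, is_lub (S x) (m x)).
  { intros x. unfold m. destruct (completeness (S x) (bnd x) (ne x)); auto. }
  assert (Hm2 : forall x y, m x <= m y + 2 * C * Rabs (x - y)).
  { intros x y. apply (proj2 (Hm x)). intros z [be [Hbe ->]].
    set (cx := clamp 0 1 x) in *. set (cy := clamp 0 1 y).
    pose proof (clamp_in 0 1 y). fold cy in H.
    set (be' := Rmin be (1 - cy)).
    assert (Hbe' : 0 <= be' <= 1 - cy) by (unfold be', Rmin; destruct Rle_dec; lra).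
    assert (Hd : Rabs (be - be') <= Rabs (cx - cy)) by (unfold be', Rmin; destruct Rle_dec; split_Rabs; lra).
    assert (Sy : S y (g cy be')) by (exists be'; auto).
    pose proof (proj1 (Hm y) _ Sy).
    pose proof (Hg cy be' cx be (HDc y be' Hbe') (HDc x be Hbe)).
    pose proof (clamp_lip 0 1 x y ltac:(lra)). fold cx cy in H2.
    assert (C * (Rabs (cx - cy) + Rabs (be - be')) <= 2 * C * Rabs (x - y)).
    { assert (Rabs (cx - cy) + Rabs (be - be') <= 2 * Rabs (x - y)) by lra.
      apply (Rmult_le_compat_l C) in H3; [lra|auto]. }
    split_Rabs; lra. }
  assert (Hmc : forall c, continuity_pt m c).
  { intros c. apply (lip_cont m (2 * C)); [lra|].
    intros x y. pose proof (Hm2 x y). pose proof (Hm2 y x).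
    rewrite (Rabs_minus_sym y x) in H0. apply Rabs_le; lra. }
  destruct (continuity_ab_maj m 0 1 ltac:(lra) (fun c _ => Hmc c)) as [al [Hal Hal01]].
  set (f := fun be => g al (clamp 0 (1 - al) be)).
  assert (Hfc : forall c, continuity_pt f c).
  { intros c. apply (lip_cont f C); auto. intros x y. unfold f.
    assert (Hin : forall z, inD al (clamp 0 (1 - al) z)).
    { intros z. pose proof (clamp_in 0 (1 - al) z ltac:(lra)). unfold inD; lra. }
    pose proof (Hg _ _ _ _ (Hin y) (Hin x)).
    replace (al - al) with 0 in H by ring. rewrite Rabs_R0, Rplus_0_l in H.
    pose proof (clamp_lip 0 (1 - al) x y ltac:(lra)).
    apply (Rmult_le_compat_l C) in H0; auto. lra. }
  destruct (continuity_ab_maj f 0 (1 - al) ltac:(lra) (fun c _ => Hfc c)) as [be [Hbe Hbe01]].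
  assert (Hclal : clamp 0 1 al = al) by (apply clamp_id; lra).
  exists al, (clamp 0 (1 - al) be). split.
  { pose proof (clamp_in 0 (1 - al) be ltac:(lra)). unfold inD; lra. }
  intros a' b' HD.
  assert (Sa : S a' (g a' b')).
  { exists b'. rewrite (clamp_id 0 1 a') by (unfold inD in HD; lra). unfold inD in HD; split; [lra|auto]. }
  pose proof (proj1 (Hm a') _ Sa).
  assert (Ha' : m a' <= m al) by (apply Hal; unfold inD in HD; lra).
  assert (m al <= f be).
  { apply (proj2 (Hm al)). intros z [b0 [Hb0 ->]]. rewrite Hclal in *.
    pose proof (Hbe b0 Hb0). unfold f in H0. rewrite (clamp_id 0 (1 - al) b0) in H0 by lra. auto. }
  unfold f in H0. lra.
Qed.

Definition CP (g : R -> R -> R) (a b : R) : Prop :=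
  (inD a b /\ zero_grad_on_D g a b) \/
  (a = 0 /\ 0 <= b <= 1 /\ zero_deriv_on_01 (fun s => g 0 s) b) \/
  (b = 0 /\ 0 <= a <= 1 /\ zero_deriv_on_01 (fun s => g s 0) a) \/
  (b = 1 - a /\ 0 <= a <= 1 /\ zero_deriv_on_01 (fun s => g s (1 - s)) a) \/
  (a = 0 /\ b = 0) \/ (a = 1 /\ b = 0) \/ (a = 0 /\ b = 1).

Lemma helper1 c L del : 0 <= L -> 0 < del -> (forall t, 0 < t < del -> c * t <= L * (t * t)) -> c <= 0.
Proof.
  intros HL Hd H. destruct (Rle_lt_dec c 0) as [|Hc]; auto.
  set (t := Rmin (del / 2) (c / (L + 1) / 2)).
  assert (t1 : 0 < t) by (unfold t, Rmin; destruct Rle_dec; apply Rdiv_lt_0_compat; try lra;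
      apply Rdiv_lt_0_compat; lra).
  assert (t2 : t < del) by (unfold t; pose proof (Rmin_l (del/2) (c / (L + 1) / 2)); lra).
  assert (t3 : (L + 1) * t <= c / 2).
  { unfold t; pose proof (Rmin_r (del/2) (c / (L + 1) / 2)).
    apply (Rmult_le_compat_l (L+1)) in H0; [|lra].
    replace ((L + 1) * (c / (L + 1) / 2)) with (c/2) in H0 by (field; lra). lra. }
  specialize (H t (conj t1 t2)). nra.
Qed.

Lemma small_quad L eps x : 0 <= L -> 0 < eps -> 0 <= x -> x < eps / (L + 1) -> L * (x * x) <= eps * x.
Proof.
  intros. assert (x * (L + 1) < eps).
  { apply (Rmult_lt_compat_r (L+1)) in H2; [|lra].
    replace (eps / (L + 1) * (L + 1)) with eps in H2 by (field; lra). lra. }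
  nra.
Qed.

Lemma crit g s a b : Qf g -> (s = 1 \/ s = -1) -> inD a b ->
  (forall a' b', inD a' b' -> s * g a' b' <= s * g a b) -> CP g a b.
Proof.
  intros (ga & gb & L & M & HL & HM & Hb & Hr) Hs HD Hmax.
  set (A := ga a b). set (Bb := gb a b).
  assert (DIR : forall da db, inD (a + da) (b + db) ->
     s * (A * da + Bb * db) <= L * ((Rabs da + Rabs db) * (Rabs da + Rabs db))).
  { intros da db HD'. pose proof (Hr a b _ _ HD HD') as R1.
    replace (a + da - a) with da in R1 by ring. replace (b + db - b) with db in R1 by ring.
    pose proof (Hmax _ _ HD'). fold A Bb in R1.
    pose proof (Rle_abs (g (a + da) (b + db) - g a b - A * da - Bb * db)).
    pose proof (Rle_abs (- (g (a + da) (b + db) - g a b - A * da - Bb * db))).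
    rewrite Rabs_Ropp in H1.
    destruct Hs; subst s; lra. }
  assert (DZ : forall e1 e2 del, 0 < del ->
     (forall t, 0 < t < del -> inD (a + t * e1) (b + t * e2) /\ inD (a + - (t * e1)) (b + - (t * e2))) ->
     A * e1 + Bb * e2 = 0).
  { intros e1 e2 del Hdel Hin.
    set (L' := L * ((Rabs e1 + Rabs e2) * (Rabs e1 + Rabs e2))).
    assert (HL' : 0 <= L') by (unfold L'; pose proof (Rabs_pos e1); pose proof (Rabs_pos e2);
      apply Rmult_le_pos; auto; apply Rmult_le_pos; lra).
    assert (c1 : s * (A * e1 + Bb * e2) <= 0).
    { apply (helper1 _ L' del); auto. intros t Ht. destruct (Hin t Ht) as [H1 _].
      pose proof (DIR _ _ H1). rewrite !Rabs_mult, (Rabs_pos_eq t) in H by lra.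
      unfold L'. replace (s * (A * e1 + Bb * e2) * t) with (s * (A * (t * e1) + Bb * (t * e2))) by ring.
      eapply Rle_trans; [apply H| right; ring]. }
    assert (c2 : - (s * (A * e1 + Bb * e2)) <= 0).
    { apply (helper1 _ L' del); auto. intros t Ht. destruct (Hin t Ht) as [_ H1].
      pose proof (DIR _ _ H1). rewrite !Rabs_Ropp, !Rabs_mult, (Rabs_pos_eq t) in H by lra.
      unfold L'. replace (- (s * (A * e1 + Bb * e2)) * t) with (s * (A * - (t * e1) + Bb * - (t * e2))) by ring.
      eapply Rle_trans; [apply H| right; ring]. }
    destruct Hs; subst s; lra. }
  assert (REM : forall a' b', inD a' b' ->
     Rabs (g a' b' - g a b - A * (a' - a) - Bb * (b' - b)) <= L * ((Rabs (a' - a) + Rabs (b' - b)) * (Rabs (a' - a) + Rabs (b' - b))))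
    by (intros; apply Hr; auto).
  clearbody A Bb. clear Hr.
  unfold inD in HD.
  destruct (Req_dec a 0) as [Ha0|Ha0].
  - subst a. destruct (Req_dec b 0) as [Hb0|Hb0]; [right;right;right;right;left; auto|].
    destruct (Req_dec b 1) as [Hb1|Hb1]; [right;right;right;right;right;right; auto|].
    assert (HB : Bb = 0).
    { assert (A * 0 + Bb * 1 = 0); [|lra].
      apply (DZ 0 1 (Rmin b (1 - b))). { unfold Rmin; destruct Rle_dec; lra. }
      intros t Ht. pose proof (Rmin_l b (1 - b)). pose proof (Rmin_r b (1 - b)).
      unfold inD; split; lra. }
    right; left. split; auto. split; [lra|].
    intros eps Heps. exists (eps / (L + 1)). split; [apply Rdiv_lt_0_compat; lra|].
    intros s0 Hs0 Hd. assert (inD 0 s0) by (unfold inD; lra).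
    pose proof (REM _ _ H). rewrite HB in H0. replace (0 - 0) with 0 in H0 by ring.
    rewrite Rabs_R0, Rplus_0_l in H0.
    replace (g 0 s0 - g 0 b - A * 0 - 0 * (s0 - b)) with (g 0 s0 - g 0 b) in H0 by ring.
    pose proof (small_quad L eps (Rabs (s0 - b)) HL Heps (Rabs_pos _) Hd). lra.
  - destruct (Req_dec b 0) as [Hb0|Hb0].
    + subst b. destruct (Req_dec a 1) as [Ha1|Ha1]; [right;right;right;right;right;left; auto|].
      assert (HA : A = 0).
      { assert (A * 1 + Bb * 0 = 0); [|lra].
        apply (DZ 1 0 (Rmin a (1 - a))). { unfold Rmin; destruct Rle_dec; lra. }
        intros t Ht. pose proof (Rmin_l a (1 - a)). pose proof (Rmin_r a (1 - a)).
        unfold inD; split; lra. }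
      right; right; left. split; auto. split; [lra|].
      intros eps Heps. exists (eps / (L + 1)). split; [apply Rdiv_lt_0_compat; lra|].
      intros s0 Hs0 Hd. assert (inD s0 0) by (unfold inD; lra).
      pose proof (REM _ _ H). rewrite HA in H0. replace (0 - 0) with 0 in H0 by ring.
      rewrite Rabs_R0, Rplus_0_r in H0.
      replace (g s0 0 - g a 0 - 0 * (s0 - a) - Bb * 0) with (g s0 0 - g a 0) in H0 by ring.
      pose proof (small_quad L eps (Rabs (s0 - a)) HL Heps (Rabs_pos _) Hd). lra.
    + destruct (Req_dec (a + b) 1) as [Hab|Hab].
      * assert (HAB : A - Bb = 0).
        { assert (A * 1 + Bb * (-1) = 0); [|lra].
          apply (DZ 1 (-1) (Rmin a b)). { unfold Rmin; destruct Rle_dec; lra. }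
          intros t Ht. pose proof (Rmin_l a b). pose proof (Rmin_r a b).
          unfold inD; split; lra. }
        right; right; right; left. split; [lra|]. split; [lra|].
        intros eps Heps. exists (eps / (4 * L + 1)). split; [apply Rdiv_lt_0_compat; lra|].
        intros s0 Hs0 Hd. assert (inD s0 (1 - s0)) by (unfold inD; lra).
        pose proof (REM _ _ H).
        replace (1 - s0 - b) with (- (s0 - a)) in H0 by lra.
        rewrite Rabs_Ropp in H0. replace b with (1 - a) in H0 by lra.
        replace (g s0 (1 - s0) - g a (1 - a) - A * (s0 - a) - Bb * - (s0 - a))
          with (g s0 (1 - s0) - g a (1 - a) - (A - Bb) * (s0 - a)) in H0 by ring.
        rewrite HAB, Rmult_0_l, Rminus_0_r in H0.
        pose proof (small_quad (4 * L) eps (Rabs (s0 - a)) ltac:(lra) Heps (Rabs_pos _) Hd).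
        replace (L * ((Rabs (s0 - a) + Rabs (s0 - a)) * (Rabs (s0 - a) + Rabs (s0 - a))))
          with (4 * L * (Rabs (s0 - a) * Rabs (s0 - a))) in H0 by ring.
        replace b with (1 - a) by lra. lra.
      * assert (HA : A = 0).
        { assert (A * 1 + Bb * 0 = 0); [|lra].
          apply (DZ 1 0 (Rmin a (1 - a - b))). { unfold Rmin; destruct Rle_dec; lra. }
          intros t Ht. pose proof (Rmin_l a (1 - a - b)). pose proof (Rmin_r a (1 - a - b)).
          unfold inD; split; lra. }
        assert (HB : Bb = 0).
        { assert (A * 0 + Bb * 1 = 0); [|lra].
          apply (DZ 0 1 (Rmin b (1 - a - b))). { unfold Rmin; destruct Rle_dec; lra. }
          intros t Ht. pose proof (Rmin_l b (1 - a - b)). pose proof (Rmin_r b (1 - a - b)).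
          unfold inD; split; lra. }
        left. split; [unfold inD; lra|].
        intros eps Heps. exists (eps / (L + 1)). split; [apply Rdiv_lt_0_compat; lra|].
        intros a' b' HD' Hd.
        pose proof (REM _ _ HD'). rewrite HA, HB in H.
        replace (g a' b' - g a b - 0 * (a' - a) - 0 * (b' - b)) with (g a' b' - g a b) in H by ring.
        pose proof (small_quad L eps (Rabs (a' - a) + Rabs (b' - b)) HL Heps ltac:(pose proof (Rabs_pos (a'-a)); pose proof (Rabs_pos (b'-b)); lra) Hd).
        idtac. lra.
Qed.

Lemma B_aff (j : Z) : exists c d, forall t, IZR j <= t <= IZR j + 1 -> B t = c + d * t.
Proof.
  destruct (Z_lt_le_dec j (-1)) as [H1|H1].
  - exists 0, 0. intros t Ht. assert (IZR j <= -2) by (apply IZR_le; lia).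
    unfold B; repeat destruct Rle_dec; lra.
  - destruct (Z_lt_le_dec j 0) as [H2|H2].
    + assert (j = (-1)%Z) by lia. subst. exists 1, 1. intros t Ht.
      unfold B; repeat destruct Rle_dec; lra.
    + destruct (Z_lt_le_dec j 1) as [H3|H3].
      * assert (j = 0%Z) by lia. subst. exists 1, (-1). intros t Ht.
        unfold B; repeat destruct Rle_dec; lra.
      * exists 0, 0. intros t Ht. assert (1 <= IZR j) by (apply IZR_le; lia).
        unfold B; repeat destruct Rle_dec; lra.
Qed.

Lemma B_aff2 (N n g : Z) : (0 < N)%Z -> exists c d, forall x,
  IZR n <= x * IZR N <= IZR n + 1 -> B (x - IZR g) = c + d * x.
Proof.
  intros HN.
  pose proof (Z.div_mod n N ltac:(lia)) as Hdm.
  pose proof (Z.mod_pos_bound n N HN) as Hr.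
  set (q := (n / N)%Z) in *. set (r := (n mod N)%Z) in *.
  destruct (B_aff (q - g)) as [c0 [d0 Hc]].
  exists (c0 - d0 * IZR g), d0. intros x Hx.
  assert (En : IZR n = IZR N * IZR q + IZR r) by (rewrite Hdm at 1; rewrite plus_IZR, mult_IZR; auto).
  assert (Nr : 0 < IZR N) by (apply IZR_lt; auto).
  assert (r0 : 0 <= IZR r) by (apply IZR_le; lia).
  assert (r1 : IZR r + 1 <= IZR N) by (rewrite <- plus_IZR; apply IZR_le; lia).
  rewrite minus_IZR in Hc.
  rewrite Hc.
  - ring.
  - split.
    + assert (IZR q <= x); [|lra].
      destruct (Rle_lt_dec (IZR q) x); auto. nra.
    + assert (x <= IZR q + 1); [|lra].
      destruct (Rle_lt_dec x (IZR q + 1)); auto. nra.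
Qed.

Lemma w_pos K k : 0 < w K k.
Proof. unfold w. apply Rinv_0_lt_compat, pow_lt; lra. Qed.

Lemma Qf_Bcoord K k (a1 g1 : Z) (X : R -> R -> R) : (k <= K)%nat -> Qf X ->
  (forall al be, inD al be -> w K 0 * IZR a1 <= X al be <= w K 0 * (IZR a1 + 1)) ->
  Qf (fun al be => B (/ w K k * (X al be - w K k * IZR g1))).
Proof.
  intros Hk HX Hb.
  set (N := (2 ^ Z.of_nat k)%Z).
  assert (EN : IZR N = 2 ^ k) by (unfold N; rewrite <- pow_IZR; auto).
  assert (HN : (0 < N)%Z) by (apply lt_IZR; rewrite EN; apply pow_lt; lra).
  destruct (B_aff2 N a1 g1 HN) as [c [d Hcd]].
  pose proof (w_pos K k) as Hw.
  assert (EK : 2 ^ K = 2 ^ k * 2 ^ (K - k)).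
  { rewrite <- pow_add. f_equal. lia. }
  assert (W0 : w K 0 = / 2 ^ K) by (unfold w; rewrite Nat.sub_0_r; auto).
  assert (Wk : / w K k = 2 ^ (K - k)) by (unfold w; rewrite Rinv_inv; auto).
  pose proof (pow_lt 2 k ltac:(lra)). pose proof (pow_lt 2 (K - k) ltac:(lra)).
  apply Qf_ext_D with (fun al be => c + d * (X al be * 2 ^ (K - k))).
  - intros al be HD.
    replace (/ w K k * (X al be - w K k * IZR g1)) with (X al be * 2 ^ (K - k) - IZR g1)
      by (rewrite <- Wk; field; lra).
    apply Hcd. rewrite EN. specialize (Hb al be HD). rewrite W0, EK in Hb.
    replace (X al be * 2 ^ (K - k) * 2 ^ k) with (X al be * (2 ^ k * 2 ^ (K - k))) by ring.
    assert (0 < 2 ^ k * 2 ^ (K - k)) by (apply Rmult_lt_0_compat; auto).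
    destruct Hb as [Hb1 Hb2].
    apply (Rmult_le_compat_r (2 ^ k * 2 ^ (K - k))) in Hb1; [|lra].
    apply (Rmult_le_compat_r (2 ^ k * 2 ^ (K - k))) in Hb2; [|lra].
    replace (/ (2 ^ k * 2 ^ (K - k)) * IZR a1 * (2 ^ k * 2 ^ (K - k))) with (IZR a1) in Hb1 by (field; lra).
    replace (/ (2 ^ k * 2 ^ (K - k)) * (IZR a1 + 1) * (2 ^ k * 2 ^ (K - k))) with (IZR a1 + 1) in Hb2 by (field; lra).
    lra.
  - qf. auto.
Qed.

Lemma Qf_sum_f (F : nat -> R -> R -> R) n : (forall k, (k <= n)%nat -> Qf (F k)) ->
  Qf (fun a b => sum_f_R0 (fun k => F k a b) n).
Proof.
  induction n; intros H.
  - simpl. apply H; lia.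
  - apply Qf_ext with (fun a b => sum_f_R0 (fun k => F k a b) n + F (S n) a b).
    + intros; reflexivity.
    + apply Qf_plus; [apply IHn; intros; apply H; lia | apply H; lia].
Qed.

Lemma Qf_fold (F : zpt -> R -> R -> R) l : (forall x, Qf (F x)) ->
  Qf (fun a b => fold_right (fun x acc => F x a b + acc) 0 l).
Proof.
  induction l; intros H; simpl.
  - apply Qf_const.
  - apply Qf_plus; auto.
Qed.

Lemma Qf_H K G lam T : in_depth0_cell K T -> Qf (fun x y => fspl K G lam (tpar T x y)).
Proof.
  intros [a1 [a2 [a3 Hc]]].
  assert (Hin : forall al be, inD al be -> in_tri T (tpar T al be)).
  { intros al be HD. exists al, be; auto. }
  unfold fspl.
  apply (Qf_sum_f (fun k al be => fold_right (fun a acc =>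
      lam k a * B3 (pscal (/ w K k) (psub (tpar T al be) (gridpt (w K k) a))) + acc) 0 (G k))).
  intros k Hk.
  apply (Qf_fold (fun a al be => lam k a * B3 (pscal (/ w K k) (psub (tpar T al be) (gridpt (w K k) a))))).
  intros [[g1 g2] g3].
  apply Qf_ext with (fun al be => lam k ((g1, g2), g3) *
     (B (/ w K k * (px (tpar T al be) - w K k * IZR g1)) *
      B (/ w K k * (py (tpar T al be) - w K k * IZR g2)) *
      B (/ w K k * (pz (tpar T al be) - w K k * IZR g3)))).
  { intros; reflexivity. }
  apply Qf_mult; [apply Qf_const|].
  apply Qf_mult; [apply Qf_mult|].
  - apply (Qf_Bcoord K k a1); auto.
    + unfold tpar, padd, pscal, psub, px; simpl. qf.
    + intros al be HD. apply (Hc _ (Hin al be HD)).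
  - apply (Qf_Bcoord K k a2); auto.
    + unfold tpar, padd, pscal, psub, py, px, pz; simpl. qf.
    + intros al be HD. apply (Hc _ (Hin al be HD)).
  - apply (Qf_Bcoord K k a3); auto.
    + unfold tpar, padd, pscal, psub, py, px, pz; simpl. qf.
    + intros al be HD. apply (Hc _ (Hin al be HD)).
Qed.

Lemma tpar_verts T : tpar T 0 0 = t1 T /\ tpar T 1 0 = t2 T /\ tpar T 0 1 = t3 T.
Proof.
  destruct T as [[[[x1 y1] z1] [[x2 y2] z2]] [[x3 y3] z3]].
  unfold tpar, padd, pscal, psub, px, py, pz, t1, t2, t3; simpl.
  repeat split; repeat f_equal; ring.
Qed.

Lemma CP_cand F T a b : CP (fun al be => F (tpar T al be)) a b -> candidate F T (tpar T a b).
Proof.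
  unfold candidate; cbv zeta.
  destruct (tpar_verts T) as [V1 [V2 V3]].
  intros [[HD Hz]|[[-> [Hb Hz]]|[[-> [Ha Hz]]|[[-> [Ha Hz]]|[[-> ->]|[[-> ->]|[-> ->]]]]]]].
  - left. exists a, b; auto.
  - right; left. exists b; auto.
  - right; right; left. exists a; auto.
  - right; right; right; left. exists a; auto.
  - right; right; right; right; left; auto.
  - right; right; right; right; right; left; auto.
  - right; right; right; right; right; right; auto.
Qed.

Lemma ext_pt g s : Qf g -> (s = 1 \/ s = -1) ->
  exists a b, inD a b /\ (forall a' b', inD a' b' -> s * g a' b' <= s * g a b) /\ CP g a b.
Proof.
  intros HQ Hs.
  assert (HQs : Qf (fun a b => s * g a b)) by (apply Qf_mult; [apply Qf_const|auto]).
  destruct (Qf_lip _ HQs) as [C [HC HL]].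
  destruct (max2D _ C HC HL) as [a [b [HD Hm]]].
  exists a, b. split; auto. split; auto.
  apply (crit g s); auto.
Qed.

Theorem theorem1 (K : nat) (G : nat -> list zpt) (lam : nat -> zpt -> R)
  (M : list (tri * list tri)) (e1 e2 : R) :
  (forall k, (k <= K)%nat -> NoDup (G k)) ->
  (forall TS, In TS M -> nondegenerate (fst TS) /\ valid_subdivision K (fst TS) (snd TS)) ->
  is_min_on (fspl K G lam) (cand_set (fspl K G lam) M) e1 ->
  is_max_on (fspl K G lam) (cand_set (fspl K G lam) M) e2 ->
  forall v, on_mesh M v -> e1 <= fspl K G lam v <= e2.
Proof.
  intros _ HM Hmin Hmax v [TS [HTS Hv]].
  destruct (HM TS HTS) as [_ [Hsub [Hsplit _]]].
  destruct (proj1 (Hsplit v) Hv) as [T' [HT' [al [be [HD ->]]]]].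
  destruct (Hsub T' HT') as [_ Hcell].
  pose proof (Qf_H K G lam T' Hcell) as HQ.
  split.
  - destruct (ext_pt _ (-1) HQ ltac:(auto)) as [a [b [HDab [Hle HCP]]]].
    pose proof (CP_cand _ _ _ _ HCP) as Hc.
    assert (cand_set (fspl K G lam) M (tpar T' a b)) by (exists TS, T'; auto).
    pose proof (proj2 Hmin _ H). pose proof (Hle al be HD). lra.
  - destruct (ext_pt _ 1 HQ ltac:(auto)) as [a [b [HDab [Hle HCP]]]].
    pose proof (CP_cand _ _ _ _ HCP) as Hc.
    assert (cand_set (fspl K G lam) M (tpar T' a b)) by (exists TS, T'; auto).
    pose proof (proj2 Hmax _ H). pose proof (Hle al be HD). lra.
Qed.
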